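(* Let $Y$ be a variable. For all positive integers $n$, $$\det_{0\le i,j\le n-1}\left(Y+2^{-2\lceil(i+j)/2\rceil}\binom{2\lceil(i+j)/2\rceil}{\lceil(i+j)/2\rceil}\right)=2^{-n(n-1)}(Yn+1).$$ *)

(* Defs.v *)
From mathcomp Require Import all_boot all_algebra.
Set Implicit Arguments. Unset Strict Implicit. Unset Printing Implicit Defensive.
Import GRing.Theory.
Local Open Scope ring_scope.

Definition ceilhalf (m : nat) : nat := uphalf m.

Definition cbin (k : nat) : rat := ('C(k.*2, k))%:R / (2 ^+ k.*2).

(* Main.v *)
Require Import Defs.
From mathcomp Require Import all_boot all_algebra.
From mathcomp Require Import zify ring.
Import GRing.Theory.


Definition hT (g : nat -> nat) (k : nat) : nat :=
  match k with 0 => g 0 + g 1 | k'.+1 => g k' + g k'.+2 end.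

Fixpoint NN (s : nat) : nat -> nat :=
  match s with 0 => fun k => nat_of_bool (k == 0) | s'.+1 => hT (NN s') end.

Lemma shiftT f g c : f c.+1 = 0 -> f c.+2 = 0 ->
  \sum_(0 <= k < c.+2) hT f k * g k = \sum_(0 <= k < c.+2) f k * hT g k.
Proof.
move=> f1 f2.
have X1 : \sum_(0<=k<c.+1) f k * g k.+1 = f 0 * g 1 + \sum_(0<=k<c.+1) f k.+1 * g k.+2.
  by rewrite big_nat_recl // big_nat_recr //= f1 mul0n addn0.
have X2 : \sum_(0<=k<c.+1) f k.+1 * g k = f 1 * g 0 + \sum_(0<=k<c.+1) f k.+2 * g k.+1.
  by rewrite big_nat_recl // big_nat_recr //= f2 mul0n addn0.
rewrite big_nat_recl // [RHS]big_nat_recl //=.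
have -> : \sum_(0 <= i < c.+1) hT f i.+1 * g i.+1 =
   \sum_(0 <= i < c.+1) f i * g i.+1 + \sum_(0 <= i < c.+1) f i.+2 * g i.+1.
  by rewrite -big_split; apply: eq_bigr => k _ /=; rewrite mulnDl.
have -> : \sum_(0 <= i < c.+1) f i.+1 * hT g i.+1 =
   \sum_(0 <= i < c.+1) f i.+1 * g i + \sum_(0 <= i < c.+1) f i.+1 * g i.+2.
  by rewrite -big_split; apply: eq_bigr => k _ /=; rewrite mulnDr.
rewrite X1 X2; ring.
Qed.

Lemma NN_gt s k : s < k -> NN s k = 0.
Proof.
elim: s k => [|s IH] [|k] //= lt; rewrite !IH //; lia.
Qed.

Lemma NN_diag s : NN s s = 1.
Proof. by elim: s => //= s ->; rewrite NN_gt. Qed.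

Lemma NN_closed s k : k <= s -> NN s k = 'C(s, (s - k)./2).
Proof.
elim: s k => [|s IH] [|k] //= le.
- case: s IH le => [|t] IH le; first by [].
  rewrite IH // IH // subn0 subSS subn0 /=.
  rewrite binS; match goal with |- ?g => idtac g end; congr (_ + _).
  idtac "GOAL"; match goal with |- ?g => idtac g end; rewrite uphalf_half; case o: (odd t) => //=.
  have ht := odd_double_half t; rewrite o add0n in ht.
  rewrite -bin_sub; last lia.
  congr 'C(_, _); rewrite -{2}ht -!muln2; lia.
- rewrite subSS IH; last lia.
  case: (leqP k.+2 s) => h.
  + rewrite IH //.
    have -> : s - k = (s - k.+2).+2 by lia.
    by rewrite /= binS addnC.
  + rewrite NN_gt // addn0.
    have [->|->] : s - k = 0 \/ s - k = 1 by lia.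
    all: by rewrite !bin0.
Qed.

Lemma NN_sum B i : i < B -> \sum_(0 <= k < B) NN i k = 2 ^ i.
Proof.
elim: i B => [|i IH] B lt.
  case: B lt => // B _; rewrite big_nat_recl //= big1 // => k _ //.
case: B lt => [|[|c]] // lt.
have -> : \sum_(0 <= k < c.+2) NN i.+1 k = \sum_(0 <= k < c.+2) hT (NN i) k * (fun _ => 1) k.
  by apply: eq_bigr => k _; rewrite muln1.
rewrite shiftT ?NN_gt //; try lia.
have -> : \sum_(0 <= k < c.+2) NN i k * hT (fun=> 1) k = (\sum_(0 <= k < c.+2) NN i k) * 2.
  rewrite big_distrl /=; apply: eq_bigr => k _; by case: k.
rewrite IH //; last lia. by rewrite expnS mulnC.
Qed.

Lemma NN_G B i j : i < B -> \sum_(0 <= k < B) NN i k * NN j k = NN (i + j) 0.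
Proof.
elim: i B j => [|i IH] B j lt.
  case: B lt => // B _; rewrite big_nat_recl //= big1 ?addn0 ?mul1n // => k _; rewrite mul0n.
case: B lt => [|[|c]] // lt.
have -> : \sum_(0 <= k < c.+2) NN i.+1 k * NN j k = \sum_(0 <= k < c.+2) hT (NN i) k * NN j k by [].
rewrite shiftT; try (apply: NN_gt; lia).
change (\sum_(0 <= k < c.+2) NN i k * NN j.+1 k = NN (i.+1 + j) 0).
rewrite (IH _ j.+1); last lia. by rewrite addnS.
Qed.

Local Open Scope ring_scope.

Lemma cbinE s : cbin (uphalf s) = ('C(s, s./2))%:R / 2 ^+ s.
Proof.
have [m [->|->]] : exists m, (s = m.*2 \/ s = (m.*2).+1)%N.
  exists s./2; have h := odd_double_half s.
  by case: (odd s) h => /= h; [right|left]; rewrite -{1}h.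
- by rewrite /ceilhalf uphalf_double doubleK.
- rewrite /cbin /= uphalf_double doubleK doubleS binS.
  have -> : 'C(m.*2.+1, m.+1) = 'C(m.*2.+1, m).
    rewrite -bin_sub; last lia.
    congr 'C(_, _); rewrite -muln2; lia.
  rewrite natrD !exprS; field; exact: expf_neq0.
Qed.

Lemma keyE n (i j : nat) : (i < n)%N ->
  cbin (ceilhalf (i + j)) = \sum_(k < n) ((NN i k)%:R / 2 ^+ i) * ((NN j k)%:R / 2 ^+ j).
Proof.
move=> lt.
under eq_bigr do rewrite mulrACA -natrM.
rewrite -mulr_suml -natr_sum -(big_mkord xpredT (fun k => (NN i k * NN j k)%N)).
rewrite NN_G // /ceilhalf cbinE NN_closed // subn0 exprD invfM //.
Qed.

Lemma rowsumE n (i : nat) : (i < n)%N ->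
  \sum_(k < n) ((NN i k)%:R / 2 ^+ i : rat) = 1.
Proof.
move=> lt.
rewrite -mulr_suml -natr_sum -(big_mkord xpredT (fun k => (NN i k))).
rewrite NN_sum // natrX divff // expf_neq0 //.
Qed.

Lemma sylv (R : comNzRingType) n (u v : 'cV[R]_n) :
  \det (1%:M + u *m v^T) = 1 + (v^T *m u) 0 0.
Proof.
pose P1 := block_mx 1%:M 0 v^T 1%:M : 'M[R]_(n + 1).
pose P2 := block_mx (1%:M + u *m v^T) u 0 1%:M : 'M[R]_(n + 1).
pose P3 := block_mx 1%:M 0 (- v^T) 1%:M : 'M[R]_(n + 1).
have E : P1 *m (P2 *m P3) = block_mx 1%:M u 0 (1%:M + v^T *m u).
  rewrite /P1 /P2 /P3 !mulmx_block !mulmx1 !mul1mx !mul0mx !mulmx0 !addr0 !add0r.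
  by rewrite mulmxN addrK mulmx1 subrr addrC.
have := congr1 determinant E.
rewrite !det_mulmx det_lblock det_ublock !det_lblock det_ublock !det1 !mul1r mulr1.
by rewrite mulr1 => ->; rewrite det_mx11 !mxE eqxx mulr1n.
Qed.

Lemma prodP n : (\prod_(i < n) ((2:rat) ^+ i)^-1) ^+ 2 = ((2:rat) ^+ (n * (n - 1)))^-1.
Proof.
elim: n => [|n IH]; first by rewrite big_ord0 expr1n mul0n expr0 invr1.
rewrite big_ord_recr /= exprMn IH exprVn -exprM -invfM -exprD.
congr (_ ^+ _)^-1. case: n {IH} => [|n] //. nia.
Qed.

Theorem mainTheorem9 (n : nat) : (0 < n)%N ->
  \det (\matrix_(i < n, j < n) ('X + (cbin (ceilhalf (i + j)))%:P) : 'M[{poly rat}]_n)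
  = ((2 : rat) ^+ (n * (n - 1)))^-1 *: ('X *+ n + 1).
Proof.
move=> _.
set M := (X in \det X).
pose Lm := \matrix_(i < n, k < n) (((NN i k)%:R / 2 ^+ i : rat)%:P) : 'M[{poly rat}]_n.
have Lc : forall c, Lm *m const_mx c = const_mx c :> 'cV_n.
  move=> c; apply/matrixP => i j; rewrite !mxE.
  under eq_bigr do rewrite !mxE.
  by rewrite -big_distrl /= -rmorph_sum rowsumE // mul1r.
have EM : M = Lm *m (1%:M + (const_mx ('X : {poly rat}) : 'cV_n) *m (const_mx 1 : 'cV_n)^T) *m Lm^T.
  rewrite mulmxDr mulmx1 mulmxDl !mulmxA Lc -mulmxA -trmx_mul Lc.
  apply/matrixP => i j; rewrite !mxE big_ord1 !mxE mulr1.
  under eq_bigr do rewrite !mxE -polyCM.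
  by rewrite -rmorph_sum -keyE // addrC.
rewrite EM !det_mulmx det_tr sylv det_trig; last first.
  by apply/is_trig_mxP => i k lt; rewrite mxE NN_gt // mul0r.
under eq_bigr do rewrite mxE NN_diag mul1r.
rewrite -rmorph_prod !mxE.
rewrite (eq_bigr (fun _ => ('X : {poly rat}))); last by move=> j _; rewrite !mxE mul1r.
rewrite sumr_const card_ord.
rewrite [_ * (1 + _)]mulrC -mulrA -polyCM -expr2 prodP mulrC mul_polyC addrC.
done.
Qed.
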